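(* If the ISU decomposition of $R(t)-R(0)$ (with respect to $(\mathcal{T}_n(t))_{n\in\mathbb{N}}$) is independent of the update order, i.e. there is $(D_1(t),\ldots,D_m(t))$ with $D^{\pi}_{\pi(i)}(t)=D_i(t)$ for all $i$ and all $\pi\in\sigma_m$, then the ISU decomposition (for each update order), the ceteris paribus effects of the IOAT decomposition, and the averaged ISU decomposition all coincide and equal $(D_1(t),\ldots,D_m(t))$; moreover the IOAT interaction effect is zero.
   Context: Let $(\Omega,\mathcal{A},\mathbb{P})$ be a complete probability space with a right-continuous complete filtration. Let $X=(X_1,\ldots,X_m)$ be an adapted multivariate process (risk basis), $X^t$ the process stopped at $t$, and let $R(t)=\varrho(X^t)$, $t\ge 0$, for a mapping $\varrho$. Define the revaluation surplus surface $U(t_1,\ldots,t_m)=\varrho((X_1^{t_1},\ldots,X_m^{t_m}))$, so $R(t)=U(t,\ldots,t)$. For a partition $\mathcal{T}(t)=\{0=t_0<\cdots<t_k=t\}$, the SU (sequential updating) decomposition of $R(t)-R(0)$ is $D_i(t)=\sum_{l=0}^{k-1}\big(U(t_{l+1},\ldots,t_{l+1},t_l,\ldots,t_l)-U(t_{l+1},\ldots,t_{l+1},t_l,t_l,\ldots,t_l)\big)$, where in the first term the first $i$ arguments equal $t_{l+1}$ and in the second term the first $i-1$ arguments equal $t_{l+1}$ (rest equal $t_l$); i.e. risk factors are updated in the order $1,\ldots,m$. An update order is a permutation $\pi\in\sigma_m$ (the set of all permutations of $\{1,\ldots,m\}$), meaning the factors are updated in the order given by $\pi$ instead. For a sequence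 of partitions $\mathcal{T}_n(t)$ of $[0,t]$ with vanishing mesh, the ISU (infinitesimal sequential updating) decomposition $D(t)$ is the componentwise limit in probability of the SU decompositions w.r.t. $\mathcal{T}_n(t)$; $D^{\pi}(t)=(D^\pi_1(t),\ldots,D^\pi_m(t))$ denotes the ISU decomposition for update order $\pi$. The OAT (one-at-a-time) decomposition w.r.t. $\mathcal{T}(t)$ is $(D_1(t),\ldots,D_m(t),\overline{D}(t))$ with ceteris paribus effects $D_i(t)=\sum_{l=0}^{k-1}\big(U(t_l,\ldots,t_l,t_{l+1},t_l,\ldots,t_l)-U(t_l,\ldots,t_l)\big)$ ($t_{l+1}$ in the $i$-th argument only) and interaction effect $\overline{D}(t)=R(t)-R(0)-\sum_{i=1}^m D_i(t)$; the IOAT decomposition is the componentwise limit in probability of the OAT decompositions along $\mathcal{T}_n(t)$. The averaged ISU decomposition is $D_i(t)=\frac{1}{m!}\sum_{\pi\in\sigma_m}D^\pi_{\pi(i)}(t)$, $i=1,\ldots,m$. It was previously shown that the ISU decomposition is independent of update order iff for each update order it equals the ceteris paribus effects of the IOAT decomposition, in which case the interaction effect is zero. *)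

(* Defs.v *)
From HB Require Import structures.
From mathcomp Require Import all_boot all_order all_algebra all_fingroup.
From mathcomp Require Import all_classical all_reals all_analysis.
Set Implicit Arguments. Unset Strict Implicit. Unset Printing Implicit Defensive.
Import Order.TTheory GRing.Theory Num.Theory numFieldNormedType.Exports.
Local Open Scope classical_set_scope.
Local Open Scope ring_scope.

Section Defs.
Variable R : realType.

Section Prob.
Variables (d : measure_display) (T : measurableType d) (P : probability T R).

Definition complete_prob : Prop :=
  forall N : set T, measurable N -> P N = 0%E ->
    forall A : set T, A `<=` N -> measurable A.

Definition filtration (F : R -> set (set T)) : Prop :=
  (forall s, 0 <= s -> sigma_algebra setT (F s) /\ F s `<=` measurable) /\
  (forall s u, 0 <= s -> s <= u -> F s `<=` F u).

Definition right_continuous_filtration (F : R -> set (set T)) : Prop :=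
  forall s, 0 <= s -> F s = \bigcap_(u in `]s, +oo[%classic) F u.

Definition complete_filtration (F : R -> set (set T)) : Prop :=
  forall N : set T, measurable N -> P N = 0%E -> F 0 N.

Definition adapted (m : nat) (F : R -> set (set T))
    (X : 'I_m -> R -> T -> R) : Prop :=
  forall (i : 'I_m) s, 0 <= s ->
    forall B : set R, measurable B -> F s (X i s @^-1` B).

Definition conv_in_prob (Y : nat -> T -> R) (Z : T -> R) : Prop :=
  forall eps : R, 0 < eps ->
    (fun n => P [set w | eps <= `|Y n w - Z w|]) @ \oo --> 0%E.
End Prob.

Definition stopped (T : Type) (Y : R -> T -> R) (s : R) : R -> T -> R :=
  fun u w => Y (Num.min u s) w.

Definition surface (T : Type) (m : nat)
    (rho : ('I_m -> R -> T -> R) -> T -> R) (X : 'I_m -> R -> T -> R)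
    (s : 'I_m -> R) : T -> R :=
  rho (fun i => stopped (X i) (s i)).

Definition is_partition (t : R) (p : seq R) : Prop :=
  [/\ p != [::], head 0 p = 0, last 0 p = t & sorted (fun x y => x < y) p].

Definition mesh (p : seq R) : R :=
  \big[Num.max/0]_(l < (size p).-1) (nth 0 p l.+1 - nth 0 p l).

Definition psum (T : Type) (p : seq R) (f : R -> R -> T -> R) : T -> R :=
  fun w => \sum_(l < (size p).-1) f (nth 0 p l) (nth 0 p l.+1) w.

(* ---------- SU decomposition for update order pi ----------
   Update order pi : 'S_m means risk factor i is updated at position pi i
   (0-based), so the factors are updated in the order pi^-1(0),...,pi^-1(m-1).
   SU_pos pi p k is the k-th component of the SU decomposition for order pi,
   i.e. the effect of the factor updated at position k (the paper's D^pi_k);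
   hence the paper's D^pi_{pi(i)} (effect of factor i) is SU_pos pi p (pi i).
   For pi = 1 this is exactly the SU decomposition of the context. *)
Definition upd_times (m : nat) (pi : 'S_m) (k : nat) (a b : R) : 'I_m -> R :=
  fun j => if (pi j < k)%N then b else a.

Definition SU_pos (T : Type) (m : nat)
    (rho : ('I_m -> R -> T -> R) -> T -> R) (X : 'I_m -> R -> T -> R)
    (pi : 'S_m) (p : seq R) (k : 'I_m) : T -> R :=
  psum p (fun a b w =>
    surface rho X (upd_times pi k.+1 a b) w - surface rho X (upd_times pi k a b) w).

Definition oat_times (m : nat) (i : 'I_m) (a b : R) : 'I_m -> R :=
  fun j => if j == i then b else a.

Definition OAT_cp (T : Type) (m : nat)
    (rho : ('I_m -> R -> T -> R) -> T -> R) (X : 'I_m -> R -> T -> R)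
    (p : seq R) (i : 'I_m) : T -> R :=
  psum p (fun a b w =>
    surface rho X (oat_times i a b) w - surface rho X (fun _ => a) w).

Definition OAT_int (T : Type) (m : nat)
    (rho : ('I_m -> R -> T -> R) -> T -> R) (X : 'I_m -> R -> T -> R)
    (t : R) (p : seq R) : T -> R :=
  fun w => surface rho X (fun _ => t) w - surface rho X (fun _ => 0) w
           - \sum_(i < m) OAT_cp rho X p i w.

Definition avg_ISU (T : Type) (m : nat) (Dpi : 'S_m -> 'I_m -> T -> R)
    (i : 'I_m) : T -> R :=
  fun w => (m`!%:R)^-1 * \sum_(pi : 'S_m) Dpi pi (pi i) w.

End Defs.

(* Main.v *)
Require Import Defs.
From HB Require Import structures.
From mathcomp Require Import all_boot all_order all_algebra all_fingroup.
From mathcomp Require Import all_classical all_reals all_analysis.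
From mathcomp Require Import lra measurable_realfun.
Import Order.TTheory GRing.Theory Num.Theory numFieldNormedType.Exports.
Local Open Scope classical_set_scope.
Local Open Scope ring_scope.
Section Aux.
Variables (R : realType) (d : measure_display) (T : measurableType d) (P : probability T R).

Lemma meas_ge (f : T -> R) (eps : R) : measurable_fun setT f ->
  measurable [set w | eps <= `|f w|].
Proof.
move=> mf.
have -> : [set w | eps <= `|f w|] = setT `&` (((fun x : R => `|x|) \o f) @^-1` `[eps, +oo[).
  by apply/seteqP; split => w /=; rewrite in_itv /= andbT; [|case].
exact: (measurableT_comp (@normr_measurable R setT) mf measurableT (measurable_itv _)).
Qed.

Lemma cip_add (Y Z : nat -> T -> R) :
  (forall n, measurable_fun setT (Y n)) -> (forall n, measurable_fun setT (Z n)) ->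
  conv_in_prob P Y (fun _ => 0) -> conv_in_prob P Z (fun _ => 0) ->
  conv_in_prob P (fun n w => Y n w + Z n w) (fun _ => 0).
Proof.
move=> mY mZ cY cZ eps eps0.
have e2 : 0 < eps / 2 by rewrite divr_gt0.
have h00 : ((0 : \bar R) +? 0)%E by rewrite fin_num_adde_defl.
have := cvgeD h00 (cY _ e2) (cZ _ e2).
rewrite adde0 => cYZ.
apply: (@squeeze_cvge _ _ _ _ (fun=> 0%E)); [|exact: cvg_cst|exact: cYZ].
apply: nearW => n.
rewrite measure_ge0 /=.
have mY0 : measurable_fun setT (fun w => Y n w - 0) by apply: measurable_funB.
have mZ0 : measurable_fun setT (fun w => Z n w - 0) by apply: measurable_funB.
have mYZ : measurable_fun setT (fun w => Y n w + Z n w - 0).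
  by apply: measurable_funB => //; exact: measurable_funD.
apply: (le_trans _ (measureU2 P (meas_ge _ (eps / 2) mY0) (meas_ge _ (eps / 2) mZ0))).
apply: le_measure; rewrite ?inE.
- exact: meas_ge.
- by apply: measurableU; apply: meas_ge.
move=> w /=; rewrite !subr0 => h.
case: (leP (eps / 2) `|Y n w|) => hy; first by left.
right; case: (leP (eps / 2) `|Z n w|) => hz //.
have := ler_normD (Y n w) (Z n w); lra.
Qed.

Lemma cip_sub0 (Y : nat -> T -> R) Z :
  conv_in_prob P Y Z -> conv_in_prob P (fun n w => Y n w - Z w) (fun _ => 0).
Proof.
move=> h eps e0.
have -> : (fun n => P [set w | eps <= `|Y n w - Z w - 0|]) =
          (fun n => P [set w | eps <= `|Y n w - Z w|]).
  by apply: funext => n; congr (P _); apply/seteqP; split => w /=; rewrite subr0.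
exact: h.
Qed.

Lemma cip_sub0' (Y : nat -> T -> R) Z :
  conv_in_prob P Y Z -> conv_in_prob P (fun n w => Z w - Y n w) (fun _ => 0).
Proof.
move=> h eps e0.
have -> : (fun n => P [set w | eps <= `|Z w - Y n w - 0|]) =
          (fun n => P [set w | eps <= `|Y n w - Z w|]).
  apply: funext => n; congr (P _); apply/seteqP; split => w /=; by rewrite subr0 distrC.
exact: h.
Qed.

Lemma cip_sum (I : Type) (r : seq I) (Y : I -> nat -> T -> R) :
 (forall i n, measurable_fun setT (Y i n)) -> (forall i, conv_in_prob P (Y i) (fun _ => 0)) ->
 conv_in_prob P (fun n w => \sum_(i <- r) Y i n w) (fun _ => 0).
Proof.
move=> mY cY; elim: r => [|a r IH].
  move=> eps e0.
  have -> : (fun n => P [set w | eps <= `|\sum_(i <- [::]) Y i n w - 0|]) = fun=> 0%E.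
    apply: funext => n; rewrite (_ : [set w | _] = set0) ?measure0 //.
    apply/seteqP; split => w //=; rewrite big_nil subr0 normr0; lra.
  exact: cvg_cst.
have -> : (fun n w => \sum_(i <- a :: r) Y i n w) = (fun n w => Y a n w + \sum_(i <- r) Y i n w).
  by apply: funext => n; apply: funext => w; rewrite big_cons.
apply: cip_add => // n.
exact: (measurable_sum r (h := fun i => Y i n)).
Qed.

End Aux.

Lemma meas_psum (R : realType) (d : measure_display) (T : measurableType d)
  (p : seq R) (f : R -> R -> T -> R) :
  (forall a b, measurable_fun setT (f a b)) -> measurable_fun setT (psum p f).
Proof.
move=> mf; rewrite /psum.
exact: (measurable_sum _ (h := fun l : 'I_(size p).-1 => f (nth 0 p l) (nth 0 p l.+1))).
Qed.

Lemma sum_SU (R : realType) (T : Type) (m : nat)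
    (rho : ('I_m -> R -> T -> R) -> T -> R) (X : 'I_m -> R -> T -> R)
    (pi : 'S_m) (t : R) (p : seq R) (w : T) :
  is_partition t p ->
  \sum_(k < m) SU_pos rho X pi p k w =
  surface rho X (fun _ => t) w - surface rho X (fun _ => 0) w.
Proof.
case=> pn0 ph pl _.
rewrite /SU_pos /psum exchange_big /=.
set F := fun s : R => surface rho X (fun _ => s) w.
transitivity (\sum_(l < (size p).-1) (F (nth 0 p l.+1) - F (nth 0 p l))).
  apply: eq_bigr => l _.
  set g := fun k => surface rho X (upd_times pi k (nth 0 p l) (nth 0 p l.+1)) w.
  rewrite (eq_bigr (fun k : 'I_m => g k.+1 - g k)) //.
  rewrite -(big_mkord xpredT (fun k => g k.+1 - g k)).
  rewrite telescope_sumr // /g /F.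
  have e1 : upd_times pi m (nth 0 p l) (nth 0 p l.+1) = fun=> nth 0 p l.+1.
    by apply: funext => j; rewrite /upd_times ltn_ord.
  have e0 : upd_times pi 0 (nth 0 p l) (nth 0 p l.+1) = fun=> nth 0 p l.
    by apply: funext => j; rewrite /upd_times ltn0.
  by rewrite e1 e0.
rewrite -(big_mkord xpredT (fun l => F (nth 0 p l.+1) - F (nth 0 p l))).
rewrite telescope_sumr // nth_last nth0 ph pl //.
Qed.

Theorem theorem7p3 (R : realType) (d : measure_display) (T : measurableType d)
    (P : probability T R) (F : R -> set (set T)) (m : nat)
    (X : 'I_m -> R -> T -> R) (rho : ('I_m -> R -> T -> R) -> T -> R)
    (t : R) (Tn : nat -> seq R)
    (Dpi : 'S_m -> 'I_m -> T -> R) (D : 'I_m -> T -> R) :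
  complete_prob P ->
  filtration F -> right_continuous_filtration F -> complete_filtration P F ->
  adapted F X ->
  (* rho maps stopped risk bases to random variables *)
  (forall s : 'I_m -> R, measurable_fun setT (surface rho X s)) ->
  0 <= t ->
  (forall n, is_partition t (Tn n)) ->
  mesh (Tn n) @[n --> \oo] --> (0 : R) ->
  (* Dpi pi is the ISU decomposition for update order pi *)
  (forall (pi : 'S_m) (k : 'I_m), measurable_fun setT (Dpi pi k)) ->
  (forall (pi : 'S_m) (k : 'I_m),
      conv_in_prob P (fun n => SU_pos rho X pi (Tn n) k) (Dpi pi k)) ->
  (* independence of the update order *)
  (forall (pi : 'S_m) (i : 'I_m), Dpi pi (pi i) = D i) ->
  [/\ (forall (pi : 'S_m) (i : 'I_m), Dpi pi (pi i) = D i),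
      (forall i : 'I_m, conv_in_prob P (fun n => OAT_cp rho X (Tn n) i) (D i)),
      (forall i : 'I_m, avg_ISU Dpi i = D i) &
      conv_in_prob P (fun n => OAT_int rho X t (Tn n)) (fun _ => 0)].
Proof.
move=> _ _ _ _ _ mU _ hpart _ mD hconv HD.
have mSU : forall pi k p, measurable_fun setT (SU_pos rho X pi p k).
  move=> pi k p; apply: meas_psum => a b; exact: measurable_funB.
have mOAT : forall i p, measurable_fun setT (OAT_cp rho X p i).
  move=> i p; apply: meas_psum => a b; exact: measurable_funB.
have D1 : forall k, D k = Dpi 1%g k by move=> k; rewrite -(HD 1%g k) perm1.
have mDk : forall k, measurable_fun setT (D k) by move=> k; rewrite D1.
have part2 : forall i : 'I_m, conv_in_prob P (fun n => OAT_cp rho X (Tn n) i) (D i).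
  move=> i.
  pose z : 'I_m := Ordinal (leq_ltn_trans (leq0n i) (ltn_ord i)).
  pose pi := tperm i z.
  have piz : pi i = z by rewrite tpermL.
  have -> : (fun n => OAT_cp rho X (Tn n) i) = (fun n => SU_pos rho X pi (Tn n) z).
    apply: funext => n; rewrite /OAT_cp /SU_pos /psum; apply: funext => w.
    have E1 : forall a b : R, upd_times pi z.+1 a b = oat_times i a b.
      move=> a b; apply: funext => j; rewrite /upd_times /oat_times ltnS leqn0.
      rewrite -(inj_eq val_inj) /= -[X in _ == X]/(nat_of_ord z) -piz.
      by rewrite (inj_eq val_inj) (inj_eq perm_inj).
    have E0 : forall a b : R, upd_times pi z a b = fun=> a.
      by move=> a b; apply: funext => j; rewrite /upd_times ltn0.
    by apply: eq_bigr => l _ /=; rewrite E1 E0.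
  by rewrite -(HD pi i) piz; exact: hconv.
split => //.
- move=> i; apply: funext => w; rewrite /avg_ISU.
  rewrite (eq_bigr (fun _ => D i w)); last by move=> pi _; rewrite HD.
  rewrite sumr_const card_Sn -[D i w *+ _]mulr_natl mulrA mulVf ?mul1r //.
pose Y := fun (k : 'I_m) n w => (SU_pos rho X 1%g (Tn n) k w - D k w) +
                               (D k w - OAT_cp rho X (Tn n) k w).
have -> : (fun n => OAT_int rho X t (Tn n)) = (fun n w => \sum_(k <- index_enum 'I_m) Y k n w).
  apply: funext => n; apply: funext => w; rewrite /OAT_int.
  rewrite -(@sum_SU R T m rho X 1%g t (Tn n) w (hpart n)) -sumrB.
  by apply: eq_bigr => k _; rewrite /Y addrA subrK.
apply: cip_sum => [k n|k].
  by apply: measurable_funD; apply: measurable_funB.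
apply: cip_add.
- by move=> n; apply: measurable_funB.
- by move=> n; apply: measurable_funB.
- apply: cip_sub0; rewrite D1; exact: hconv.
- exact: cip_sub0'.
Qed.
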